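(* Let $p\in(0,1]$ and consider two independent doors, each initially closed, each opening independently with probability $p$ on every knock on it (and staying open once open). Let $A_{\mathrm{simp}}=(1,2)^\infty$ be the alternating knock sequence $1,2,1,2,\dots$, executed without feedback. Then the expected number of knocks until both doors are open is $\mathbb{T}_{\mathcal{I}}(A_{\mathrm{simp}})=\frac{3}{p}-1$. *)

(* Defs.v *)
From Stdlib Require Import Reals Lra Lia Arith List.
From Coquelicot Require Import Coquelicot.
Open Scope R_scope.

(* Doors are indexed by natural numbers 0 .. n-1 (door "1" of the paper is 0,
   door "2" is 1).  A knock sequence (executed without feedback) is a function
   A : nat -> nat giving the door knocked at step s = 0,1,2,...            *)

Fixpoint knocks_on (A : nat -> nat) (i : nat) (t : nat) : nat :=
  match t with
  | O => O
  | S t' => (if Nat.eqb (A t') i then 1 else 0) + knocks_on A i t'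
  end.

(* Each door, initially closed, opens independently with probability p on
   every knock on it and stays open.  Hence door i is still closed after t
   knocks with probability (1-p)^(knocks_on A i t), and by independence of the
   doors, all n doors are open after t knocks with probability
   prod_{i<n} (1 - (1-p)^(knocks_on A i t)). *)
Definition all_open_prob (n : nat) (p : R) (A : nat -> nat) (t : nat) : R :=
  fold_right Rmult 1 (map (fun i => 1 - (1 - p) ^ (knocks_on A i t)) (seq 0 n)).

Definition tail_prob (n : nat) (p : R) (A : nat -> nat) (t : nat) : R :=
  1 - all_open_prob n p A t.

(* The expected number of knocks T_I(A) equals v:  E[T] = sum_{t>=0} P(T > t)
   (T is a nonnegative integer random variable), the series converging to v. *)
Definition expected_knocks_is (n : nat) (p : R) (A : nat -> nat) (v : R) : Prop :=
  is_series (tail_prob n p A) v.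

Definition A_simp : nat -> nat := fun s => Nat.modulo s 2.

(* Main.v *)
Require Import Defs.
From Stdlib Require Import Reals Lra Lia.
From Coquelicot Require Import Coquelicot.
Open Scope R_scope.

Lemma sum_eo (a : nat -> R) (m : nat) :
  sum_f_R0 a (2*m+1) = sum_f_R0 (fun k => a (2*k)%nat) m + sum_f_R0 (fun k => a (2*k+1)%nat) m.
Proof.
  induction m as [|m IH].
  - simpl. reflexivity.
  - replace (2 * S m + 1)%nat with (S (S (2*m+1))) by lia.
    change (sum_f_R0 a (S (S (2*m+1)))) with (sum_f_R0 a (2*m+1) + a (S (2*m+1)) + a (S (S (2*m+1)))).
    rewrite IH. simpl sum_f_R0.
    replace (S (2*m+1)) with (2 * S m)%nat by lia.
    replace (S (2 * S m)) with (2 * S m + 1)%nat by lia.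
    replace (S (m + S (m + 0))) with (2 * S m)%nat by lia.
    replace (S (m + S (m + 0) + 1)) with (2 * S m + 1)%nat by lia. ring.
Qed.

Lemma inter (a : nat -> R) l1 l2 :
  infinite_sum (fun k => a (2*k)%nat) l1 -> infinite_sum (fun k => a (2*k+1)%nat) l2 ->
  infinite_sum a (l1 + l2).
Proof.
  intros H1 H2 eps Heps.
  destruct (H1 (eps/2)) as [N1 HN1]; [lra|].
  destruct (H2 (eps/2)) as [N2 HN2]; [lra|].
  exists (2 * (N1 + N2) + 2)%nat. intros n Hn.
  destruct (Nat.Even_or_Odd n) as [[m Hm]|[m Hm]]; subst n.
  - destruct m as [|m]; [lia|].
    replace (2 * S m)%nat with (S (2*m+1)) by lia.
    change (sum_f_R0 a (S (2*m+1))) with (sum_f_R0 a (2*m+1) + a (S (2*m+1))).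
    rewrite sum_eo.
    replace (S (2*m+1)) with (2 * S m)%nat by lia.
    assert (E : sum_f_R0 (fun k => a (2*k)%nat) m + a (2 * S m)%nat
               = sum_f_R0 (fun k => a (2*k)%nat) (S m)) by (simpl; ring).
    specialize (HN1 (S m) ltac:(lia)). specialize (HN2 m ltac:(lia)).
    unfold Rdist in *.
    apply Rabs_def1; apply Rabs_def2 in HN1; apply Rabs_def2 in HN2; lra.
  - rewrite sum_eo.
    specialize (HN1 m ltac:(lia)). specialize (HN2 m ltac:(lia)).
    unfold Rdist in *.
    apply Rabs_def1; apply Rabs_def2 in HN1; apply Rabs_def2 in HN2; lra.
Qed.

Lemma m0 m : ((2*m) mod 2 = 0)%nat. Proof. rewrite Nat.mul_comm. apply Nat.Div0.mod_mul. Qed.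
Lemma m1 m : ((S (2*m)) mod 2 = 1)%nat. Proof. replace (S (2*m)) with (1 + m*2)%nat by lia. rewrite Nat.Div0.mod_add. reflexivity. Qed.

Lemma knocks_even i m : (i < 2)%nat -> knocks_on A_simp i (2*m) = m.
Proof.
  intros Hi. induction m as [|m IH]; [reflexivity|].
  replace (2 * S m)%nat with (S (S (2*m))) by lia.
  change (knocks_on A_simp i (S (S (2*m)))) with
    ((if Nat.eqb (A_simp (S (2*m))) i then 1 else 0) + ((if Nat.eqb (A_simp (2*m)) i then 1 else 0) + knocks_on A_simp i (2*m)))%nat.
  rewrite IH. unfold A_simp.
  rewrite m1.
  rewrite m0.
  destruct i as [|[|i]]; simpl; lia.
Qed.

Lemma knocks_odd0 m : knocks_on A_simp 0 (2*m+1) = S m.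
Proof.
  replace (2*m+1)%nat with (S (2*m)) by lia.
  change (knocks_on A_simp ?i (S (2*m))) with ((if Nat.eqb (A_simp (2*m)) i then 1 else 0) + knocks_on A_simp i (2*m))%nat.
  rewrite knocks_even by lia. unfold A_simp.
  rewrite m0. reflexivity.
Qed.

Lemma knocks_odd1 m : knocks_on A_simp 1 (2*m+1) = m.
Proof.
  replace (2*m+1)%nat with (S (2*m)) by lia.
  change (knocks_on A_simp ?i (S (2*m))) with ((if Nat.eqb (A_simp (2*m)) i then 1 else 0) + knocks_on A_simp i (2*m))%nat.
  rewrite knocks_even by lia. unfold A_simp.
  rewrite m0. reflexivity.
Qed.

Lemma geom_c (c x : R) : Rabs x < 1 -> is_series (fun n => c * x ^ n) (c / (1 - x)).
Proof.
  intros H. pose proof (is_series_scal_l c _ _ (is_series_geom x H)) as G.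
  exact G.
Qed.

Lemma ser_lin (a b : nat -> R) la lb :
  is_series a la -> is_series b lb -> is_series (fun n => a n + b n) (la + lb).
Proof. intros. apply (is_series_plus a b la lb); assumption. Qed.

Lemma ser_sub (a b : nat -> R) la lb :
  is_series a la -> is_series b lb -> is_series (fun n => a n - b n) (la - lb).
Proof. intros. apply (is_series_minus a b la lb); assumption. Qed.

Lemma ser_val (a : nat -> R) l l' : is_series a l -> l = l' -> is_series a l'.
Proof. intros H ->; exact H. Qed.

Theorem mainTheorem17 (p : R) (hp0 : 0 < p) (hp1 : p <= 1) :
  expected_knocks_is 2 p A_simp (3 / p - 1).
Proof.
  unfold expected_knocks_is.
  set (q := 1 - p).
  assert (Hq : Rabs q < 1) by (unfold q; apply Rabs_def1; lra).
  assert (Hq2 : Rabs (q^2) < 1).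
  { unfold q; rewrite <- RPow_abs. apply Rabs_def2 in Hq.
    assert (0 <= Rabs (1-p)) by apply Rabs_pos.
    assert (Rabs (1-p) < 1) by (apply Rabs_def1; lra). nra. }
  assert (Hp : 1 - q = p) by (unfold q; ring).
  assert (Hq2' : 1 - q^2 = p * (1 + q)) by (unfold q; ring).
  assert (Hq1 : 0 < 1 + q) by (unfold q; lra).
  apply is_series_Reals.
  replace (3 / p - 1) with ((2 / (1 - q) - 1 / (1 - q^2)) + ((q + 1) / (1 - q) - q / (1 - q^2))).
  2:{ rewrite Hp, Hq2'. unfold q. field. split; lra. }
  apply inter; apply is_series_Reals.
  - eapply is_series_ext.
    2: apply (ser_sub _ _ _ _ (geom_c 2 q Hq) (geom_c 1 (q^2) Hq2)).
    intros m. unfold tail_prob, all_open_prob. cbn [List.seq List.map List.fold_right].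
    rewrite !knocks_even by lia. fold q. rewrite <- pow_mult.
    replace (2*m)%nat with (m+m)%nat by lia. rewrite pow_add. match goal with |- ?a = ?b => change (@eq R a b) end. ring.
  - eapply is_series_ext.
    2: apply (ser_sub _ _ _ _ (geom_c (q+1) q Hq) (geom_c q (q^2) Hq2)).
    intros m. unfold tail_prob, all_open_prob. cbn [List.seq List.map List.fold_right].
    rewrite knocks_odd0, knocks_odd1. fold q. rewrite <- pow_mult.
    replace (2*m)%nat with (m+m)%nat by lia. rewrite pow_add. simpl. ring.
Qed.
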